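(* Let $(g_1,f_1,\lambda_1)$ and $(g_2,f_2,\lambda_2)$ be spectral triples for $(T,p,q)$, $1<p,q<\infty$. Then for every $\varepsilon>0$, \[ P(Tf_1-\varepsilon Tf_2)\le P\Big(Tf_1-\varepsilon^{(p-1)/(q-1)}(\lambda_2/\lambda_1)^{1/(q-1)}\,Tf_2\Big). \]
   Context: $-\infty<a<b<\infty$, $I=[a,b]$, $1<p,q<\infty$, $1/p'=1-1/p$. The functions $u,v$ are positive on $I$ with $u\in L_{p'}(I)$, $v\in L_q(I)$. $T:L_p(I)\to L_q(I)$ is $(Tf)(x)=v(x)\int_a^x f(t)u(t)\,dt$ and $T^*$ is $(T^*h)(x)=u(x)\int_x^b v(y)h(y)\,dy$. For $s>1$ and real $t$, $t_{(s)}:=|t|^{s-1}\operatorname{sgn}(t)$, and $h_{(s)}$ denotes the function $x\mapsto (h(x))_{(s)}$. A spectral triple is $(g,f,\lambda)$ with $f\in L_p(I)$, $\|f\|_p=1$, $\lambda$ a real number, satisfying $g=Tf$ and $f_{(p)}=\lambda\, T^*(g_{(q)})$ on $I$. For a continuous function $h$ on $I$, $P(h)$ is the number of sign changes of $h$ on $(a,b)$. *)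

(* Defs.v *)
From HB Require Import structures.
From mathcomp Require Import all_boot all_order all_algebra.
From mathcomp Require Import all_classical all_reals all_analysis.
Set Implicit Arguments. Unset Strict Implicit. Unset Printing Implicit Defensive.
Import Order.TTheory GRing.Theory Num.Theory.
Local Open Scope classical_set_scope.
Local Open Scope ring_scope.

Section Defs.
Variable R : realType.
Let mu := (@lebesgue_measure R).

Definition in_Lp (a b p : R) (f : R -> R) : Prop :=
  measurable_fun `[a, b] f /\
  (\int[mu]_(x in `[a, b]) ((`|f x| `^ p)%:E) < +oo)%E.

Definition pnorm (a b p : R) (f : R -> R) : R :=
  (Rintegral mu `[a, b] (fun x => `|f x| `^ p)) `^ (p^-1).

Definition Top (a : R) (u v f : R -> R) : R -> R :=
  fun x => v x * Rintegral mu `[a, x] (fun t => f t * u t).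

Definition Tstar (b : R) (u v h : R -> R) : R -> R :=
  fun x => u x * Rintegral mu `[x, b] (fun y => v y * h y).

Definition spow (s t : R) : R := (`|t| `^ (s - 1)) * Num.sg t.

Definition spectral_triple (a b p q : R) (u v g f : R -> R) (lam : R) : Prop :=
  [/\ in_Lp a b p f, pnorm a b p f = 1,
      (forall x, a <= x <= b -> g x = Top a u v f x) &
      (forall x, a <= x <= b ->
         spow p (f x) = lam * Tstar b u v (fun y => spow q (g y)) x)].

Definition has_sign_changes (a b : R) (h : R -> R) (n : nat) : Prop :=
  exists x : nat -> R,
    (forall i, (i <= n)%N -> a < x i < b) /\
    (forall i, (i < n)%N -> x i < x i.+1 /\ h (x i) * h (x i.+1) < 0).

Definition P (a b : R) (h : R -> R) : \bar R :=
  ereal_sup [set (n%:R)%:E | n in [set n | has_sign_changes a b h n]].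

End Defs.

(* Main.v *)
Require Import Defs.
From HB Require Import structures.
From mathcomp Require Import all_boot all_order all_algebra.
From mathcomp Require Import all_classical all_reals all_analysis.
From mathcomp Require Import lra ring measurable_realfun.
Import Order.TTheory GRing.Theory Num.Theory numFieldNormedType.Exports.
Local Open Scope classical_set_scope.
Local Open Scope ring_scope.



Section Aux.
Variable R : realType.
Implicit Types (a b : R) (h : R -> R).

Lemma sc_mono a b (h1 h2 : R -> R) n :
  (forall x y, a < x < b -> a < y < b -> h1 x * h1 y < 0 -> h2 x * h2 y < 0) ->
  has_sign_changes a b h1 n -> has_sign_changes a b h2 n.
Proof.
move=> H [x [Hx Hs]]; exists x; split => // i ilt.
have [xl hl] := Hs i ilt; split => //; apply: H => //.
  by apply: Hx; apply: ltnW.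
by apply: Hx.
Qed.

Lemma sc_sg a b (h1 h2 : R -> R) n :
  (forall x, a < x < b -> Num.sg (h1 x) = Num.sg (h2 x)) ->
  has_sign_changes a b h1 n -> has_sign_changes a b h2 n.
Proof.
move=> H; apply: sc_mono => x y hx hy.
rewrite -!sgr_cp0 !sgrM -(H x hx) -(H y hy).
done.
Qed.

Lemma P_mono a b (h1 h2 : R -> R) :
  (forall n, has_sign_changes a b h1 n -> has_sign_changes a b h2 n) ->
  (P a b h1 <= P a b h2)%E.
Proof.
move=> H; apply: ereal_sup_le => _ [n /= hn <-]; exists n => //; exact: H.
Qed.

End Aux.



Section Spow.
Variable R : realType.

Lemma spow_mulpos (s c t : R) : 0 < c -> spow s (c * t) = c `^ (s - 1) * spow s t.
Proof.
move=> c0; rewrite /spow normrM powRM // ?normr_ge0 // sgrM gtr0_sg // mul1r.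
by rewrite gtr0_norm // mulrA.
Qed.

Lemma sg_spow (s t : R) : Num.sg (spow s t) = Num.sg t.
Proof.
rewrite /spow sgrM; have [->|t0] := eqVneq t 0; first by rewrite !sgr0 ?mulr0.
rewrite gtr0_sg ?mul1r ?sgr_id //; by apply: powR_gt0; rewrite normr_gt0.
Qed.

Lemma spow_lt (s x y : R) : 1 < s -> x < y -> spow s x < spow s y.
Proof.
move=> s1 xy; have s0 : 0 < s - 1 by rewrite subr_gt0.
rewrite /spow.
have [x0|x0] := ltP x 0; have [y0|y0] := ltP y 0.
- rewrite !ltr0_sg // !mulrN1 ltrN2 !ltr0_norm //.
  apply: gt0_ltr_powR => //; rewrite ?nnegrE; lra.
- rewrite ltr0_sg // mulrN1.
  apply: (@lt_le_trans _ _ 0); first by rewrite oppr_lt0 powR_gt0 // normr_gt0 lt_eqF.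
  by rewrite mulr_ge0 // ?powR_ge0 // sgr_ge0.
- lra.
- have y0' : 0 < y by lra.
  rewrite (gtr0_sg y0') mulr1 !ger0_norm //.
  have [->|x0'] := eqVneq x 0; first by rewrite sgr0 mulr0 powR_gt0.
  rewrite gtr0_sg ?mulr1; last by rewrite lt_neqAle eq_sym x0'.
  by apply: gt0_ltr_powR => //; rewrite ?nnegrE; lra.
Qed.

Lemma sg_spow_sub (s x y : R) : 1 < s -> Num.sg (x - y) = Num.sg (spow s x - spow s y).
Proof.
move=> s1; have [xy|xy|->] := ltgtP x y.
- rewrite !ltr0_sg // subr_lt0 //; exact: spow_lt.
- rewrite !gtr0_sg // subr_gt0 //; exact: spow_lt.
- by rewrite !subrr.
Qed.

Lemma sg_spow_subeps (s e x y : R) : 1 < s -> 0 < e ->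
  Num.sg (x - e * y) = Num.sg (spow s x - e `^ (s - 1) * spow s y).
Proof. by move=> s1 e0; rewrite -spow_mulpos //; exact: sg_spow_sub. Qed.

Lemma spow_mul_self (s t : R) : 0 < s -> t * spow s t = `|t| `^ s.
Proof.
move=> s0; rewrite /spow mulrCA [t * Num.sg t]mulrC -normrEsg mulrC.
by rewrite mulr_powRB1 // normr_ge0.
Qed.

End Spow.



Section VD.
Variable R : realType.
Local Notation mu := (@lebesgue_measure R).

Lemma exists_same_sign (D : set R) (phi : R -> R) : measurable D ->
  mu.-integrable D (EFin \o phi) -> Rintegral mu D phi != 0 ->
  exists y, D y /\ 0 < phi y * Rintegral mu D phi.
Proof.
move=> mD iphi I0; apply/not_existsP => /= H.
have H' : forall y, D y -> 0 <= phi y * - Rintegral mu D phi.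
  move=> y Dy; rewrite mulrN oppr_ge0 leNgt; apply/negP => hy.
  by apply: (H y).
have := Rintegral_ge0 mu H'.
rewrite RintegralZr // mulrN oppr_ge0 => hle.
have : 0 < Rintegral mu D phi * Rintegral mu D phi.
  by rewrite -expr2 exprn_even_gt0.
by rewrite ltNge hle.
Qed.

Lemma Rint_point (c : R) (f : R -> R) : Rintegral mu `[c, c] f = 0.
Proof. by rewrite set_itv1 Rintegral_set1. Qed.

Lemma vd_fwd (a b : R) (phi : R -> R) n : a < b ->
  mu.-integrable `[a, b] (EFin \o phi) ->
  has_sign_changes a b (fun x => Rintegral mu `[a, x] phi) n ->
  has_sign_changes a b phi n.
Proof.
move=> ab iphi; case: n => [|m] => [_|[x [Hx Hs]]].
  by exists (fun _ => (a + b) / 2); split => // i _; apply/andP; split; lra.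
set F := fun x => Rintegral mu `[a, x] phi.
pose xm i := if i is j.+1 then x j else a.
have xmx : forall i, (i <= m.+1)%N -> a <= xm i /\ xm i < x i.
  move=> [|i] hi /=; first by have := Hx 0%N isT; case/andP => h _; split => //; lra.
  have [h1 _] := Hs i hi; have := Hx i (ltnW hi); case/andP => h2 _; split; lra.
have Fa : F a = 0 by rewrite /F Rint_point.
have Fne : forall i, (i <= m.+1)%N -> F (x i) != 0.
  move=> i hi; apply/eqP => h.
  case: i hi h => [|i] hi h.
    have [_ ] := Hs 0%N isT; rewrite -[Rintegral mu `[a, x 0%N] phi]/(F (x 0%N)).
    by rewrite h mul0r ltxx.
  have [_ ] := Hs i hi; rewrite -[Rintegral mu `[a, x i.+1] phi]/(F (x i.+1)).
  by rewrite h mulr0 ltxx.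
have key : forall i, exists y, (i <= m.+1)%N ->
    xm i < y <= x i /\ 0 < phi y * F (x i).
  move=> i; case: (leqP i m.+1) => hi; last by exists a.
  have [xm1 xm2] := xmx i hi.
  have := Hx i hi => /andP[xi1 xi2].
  have iD : mu.-integrable `]xm i, x i] (EFin \o phi).
    apply: integrableS iphi => //; apply: subset_itv; rewrite bnd_simp; lra.
  have ia : mu.-integrable `[a, x i] (EFin \o phi).
    apply: integrableS iphi => //; apply: subset_itv; rewrite bnd_simp; lra.
  have eqI : F (x i) - F (xm i) = Rintegral mu `]xm i, x i] phi.
    rewrite /F Rintegral_itvB //; rewrite bnd_simp; lra.
  have pos : 0 < Rintegral mu `]xm i, x i] phi * F (x i).
    rewrite -eqI mulrBl.
    have h0 : F (xm i) * F (x i) <= 0.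
      case: i hi {xm1 xm2 xi1 xi2 iD ia eqI} => [|i] hi /=; first by rewrite Fa mul0r.
      by have [_ /ltW] := Hs i hi.
    have : 0 < F (x i) * F (x i) by rewrite -expr2 exprn_even_gt0 //; exact: Fne.
    lra.
  have I0 : Rintegral mu `]xm i, x i] phi != 0.
    by apply/eqP => h; move: pos; rewrite h mul0r ltxx.
  have [y [Dy hy]] := @exists_same_sign _ phi (measurable_itv _) iD I0.
  exists y => _; split; first by move: Dy; rewrite /= in_itv /=.
  move: pos hy; set I := Rintegral _ _ _; set p := phi y; set f := F (x i).
  move=> h1 h2; nra.
have [y Hy] := choice key.
exists y; split.
  move=> i hi; have [/andP[h1 h2] _] := Hy i hi.
  have [xm1 _] := xmx i hi; have := Hx i hi => /andP[_ h3]; apply/andP; split; lra.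
move=> i hi.
have [/andP[h1 h2] p1] := Hy i (ltnW hi).
have [/andP[h3 h4] p2] := Hy i.+1 hi.
have [_ hs] := Hs i hi.
split; first by rewrite /= in h3; lra.
move: p1 p2 hs; rewrite /F; set A := Rintegral _ _ _; set B := Rintegral _ _ _.
move=> p1 p2 hs; nra.
Qed.

Lemma Rint_split_right (c d b : R) (f : R -> R) : c <= d -> d <= b ->
  mu.-integrable `[c, b] (EFin \o f) ->
  Rintegral mu `[c, b] f - Rintegral mu `[d, b] f = Rintegral mu `[c, d[ f.
Proof.
move=> cd db itf.
rewrite (@itv_bndbnd_setU _ _ _ (BLeft d)); last 2 first.
  by rewrite bnd_simp.
  by rewrite bnd_simp.
rewrite Rintegral_setU //=.
- by rewrite addrK.
- by rewrite -itv_bndbnd_setU // bnd_simp.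
- apply/disj_setPS => y [/=]; rewrite 2!in_itv/= => /andP[_ yx] /andP[].
  by rewrite leNgt yx.
Qed.

Lemma vd_bwd (a b : R) (psi : R -> R) n : a < b ->
  mu.-integrable `[a, b] (EFin \o psi) ->
  has_sign_changes a b (fun x => Rintegral mu `[x, b] psi) n ->
  has_sign_changes a b psi n.
Proof.
move=> ab ipsi; case: n => [|m] => [_|[x [Hx Hs]]].
  by exists (fun _ => (a + b) / 2); split => // i _; apply/andP; split; lra.
pose K := fun x => Rintegral mu `[x, b] psi.
pose xp i := if (i < m.+1)%N then x i.+1 else b.
have xpx : forall i, (i <= m.+1)%N -> x i < xp i <= b.
  move=> i hi; rewrite /xp; case: ltnP => h.
    have [h1 _] := Hs i h; have := Hx i.+1 h => /andP[_ h2]; apply/andP; split; lra.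
  have := Hx i hi => /andP[_ h2]; apply/andP; split; lra.
have Kb : K b = 0 by rewrite /K Rint_point.
have Kne : forall i, (i <= m.+1)%N -> K (x i) != 0.
  move=> i hi; apply/eqP => h.
  case: (ltnP i m.+1) => hi'.
    have [_ ] := Hs i hi'; rewrite -[Rintegral mu `[x i, b] psi]/(K (x i)).
    by rewrite h mul0r ltxx.
  have ei : i = m.+1 by apply/eqP; rewrite eqn_leq hi hi'.
  have [_ ] := Hs m (ltnSn m); rewrite -[Rintegral mu `[x m.+1, b] psi]/(K (x m.+1)).
  by rewrite -ei h mulr0 ltxx.
have key : forall i, exists y, (i <= m.+1)%N ->
    x i <= y < xp i /\ 0 < psi y * K (x i).
  move=> i; case: (leqP i m.+1) => hi; last by exists a.
  have /andP[xp1 xp2] := xpx i hi.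
  have := Hx i hi => /andP[xi1 xi2].
  have iD : mu.-integrable `[x i, xp i[ (EFin \o psi).
    apply: integrableS ipsi => //; apply: subset_itv; rewrite bnd_simp; lra.
  have ia : mu.-integrable `[x i, b] (EFin \o psi).
    apply: integrableS ipsi => //; apply: subset_itv; rewrite bnd_simp; lra.
  have eqI : K (x i) - K (xp i) = Rintegral mu `[x i, xp i[ psi.
    by rewrite /K Rint_split_right //; lra.
  have pos : 0 < Rintegral mu `[x i, xp i[ psi * K (x i).
    rewrite -eqI mulrBl.
    have h0 : K (xp i) * K (x i) <= 0.
      rewrite /xp; case: ltnP => h; last by rewrite Kb mul0r.
      by have [_ /ltW] := Hs i h; rewrite mulrC.
    have : 0 < K (x i) * K (x i) by rewrite -expr2 exprn_even_gt0 //; exact: Kne.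
    lra.
  have I0 : Rintegral mu `[x i, xp i[ psi != 0.
    by apply/eqP => h; move: pos; rewrite h mul0r ltxx.
  have [y [Dy hy]] := @exists_same_sign _ psi (measurable_itv _) iD I0.
  exists y => _; split; first by move: Dy; rewrite /= in_itv /=.
  move: pos hy; set I := Rintegral _ _ _; set p := psi y; set f := K (x i).
  move=> h1 h2; nra.
have [y Hy] := choice key.
exists y; split.
  move=> i hi; have [/andP[h1 h2] _] := Hy i hi.
  have /andP[_ xp2] := xpx i hi; have := Hx i hi => /andP[h3 _]; apply/andP; split; lra.
move=> i hi.
have [/andP[h1 h2] p1] := Hy i (ltnW hi).
have [/andP[h3 h4] p2] := Hy i.+1 hi.
have [_ hs] := Hs i hi.
split; first by move: h2; rewrite /xp hi; lra.
move: p1 p2 hs; rewrite /K; set A := Rintegral _ _ _; set B := Rintegral _ _ _.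
move=> p1 p2 hs; nra.
Qed.

End VD.



Section Integ.
Variable R : realType.
Local Notation mu := (@lebesgue_measure R).

Lemma mpow_abs (D : set R) (p : R) (f : R -> R) : measurable_fun D f ->
  measurable_fun D (fun x => `|f x| `^ p).
Proof.
move=> mf.
have h1 : measurable_fun D (fun x => `|f x|).
  exact: (measurableT_comp (@normr_measurable R setT) mf).
exact: (measurableT_comp (measurable_powR p) h1).
Qed.

Lemma Lp_integrable (a b p : R) (f : R -> R) : in_Lp a b p f ->
  mu.-integrable `[a, b] (fun x => (`|f x| `^ p)%:E).
Proof.
move=> [mf fin]; apply/integrableP; split.
  by apply/measurable_EFinP; apply: mpow_abs.
rewrite (le_lt_trans _ fin) //.
by under eq_integral do rewrite gee0_abs ?lee_fin ?powR_ge0 //.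
Qed.

Lemma prod_integrable (a b p : R) (f u : R -> R) : 1 < p ->
  in_Lp a b p f -> in_Lp a b ((1 - p^-1)^-1) u ->
  mu.-integrable `[a, b] (EFin \o (fun x => f x * u x)).
Proof.
move=> p1 hf hu; set p' := (1 - p^-1)^-1.
have p0 : 0 < p by lra.
have ip : 0 < p^-1 < 1.
  by rewrite invr_gt0 p0 /= invf_lt1.
have p'0 : 0 < p' by rewrite /p' invr_gt0; lra.
have pp : p^-1 + p'^-1 = 1 by rewrite /p' invrK; ring.
apply: (@le_integrable _ _ _ mu _ (measurable_itv _) _
  ((fun x => (p^-1)%:E * (`|f x| `^ p)%:E) \+ (fun x => (p'^-1)%:E * (`|u x| `^ p')%:E))%E).
- apply/measurable_EFinP; apply: measurable_funM; [exact: hf.1|exact: hu.1].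
- move=> x _; rewrite /= lee_fin.
  rewrite [X in _ <= X]ger0_norm; last first.
    by rewrite addr_ge0 // mulr_ge0 // ?powR_ge0 // invr_ge0 ltW.
  rewrite normrM (le_trans (conjugate_powR _ _ p0 p'0 pp)) // ?normr_ge0 //.
  by rewrite !(mulrC (_^-1)).
- apply: integrableD => //; apply: integrableZl => //; exact: Lp_integrable.
Qed.

Lemma Rint_norm_bound (a b x : R) (phi : R -> R) : a <= x <= b ->
  mu.-integrable `[a, b] (EFin \o phi) ->
  `|Rintegral mu `[a, x] phi| <= Rintegral mu `[a, b] (fun t => `|phi t|).
Proof.
move=> /andP[ax xb] iphi.
have ia : mu.-integrable `[a, x] (EFin \o phi).
  apply: integrableS iphi => //; apply: subset_itv; rewrite bnd_simp; lra.
apply: (le_trans (@le_normr_Rintegral _ _ _ mu _ _ (measurable_itv _) ia)).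
have inb : mu.-integrable `[a, b] (EFin \o (fun t => `|phi t|)).
  by have := integrable_abse iphi; apply: eq_integrable => // t _.
have := @Rintegral_itvB R (fun t => `|phi t|) (BLeft a) (BRight b) x inb.
rewrite !bnd_simp => /(_ ax xb) h.
have : 0 <= Rintegral mu `]x, b] (fun t => `|phi t|).
  by apply: Rintegral_ge0 => t _.
lra.
Qed.

Lemma spow_measurable (s : R) : 1 < s -> measurable_fun setT (spow s).
Proof.
move=> s1; apply: nondecreasing_measurable => // x y.
rewrite le_eqVlt => /predU1P[->//|xy]; exact/ltW/spow_lt.
Qed.

Lemma norm_spow (s t : R) : `|spow s t| <= `|t| `^ (s - 1).
Proof.
rewrite /spow normrM ger0_norm ?powR_ge0 //.
rewrite -[X in _ <= X]mulr1 ler_wpM2l ?powR_ge0 // normr_sg.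
by case: (_ != 0).
Qed.

Lemma psi_integrable (a b q : R) (v g phi : R -> R) : a < b -> 1 < q ->
  in_Lp a b q v -> mu.-integrable `[a, b] (EFin \o phi) ->
  (forall x, a <= x <= b -> g x = v x * Rintegral mu `[a, x] phi) ->
  mu.-integrable `[a, b] (EFin \o (fun y => v y * spow q (g y))).
Proof.
move=> ab q1 hv iphi hg.
have q0 : 0 < q - 1 by lra.
have mF : measurable_fun `[a, b] (fun x => Rintegral mu `[a, x] phi).
  apply: subspace_continuous_measurable_fun => //.
  exact: (parameterized_integral_continuous (ltW ab) iphi).
have mg : measurable_fun `[a, b] g.
  apply: (@eq_measurable_fun _ _ _ _ _ (fun x => v x * Rintegral mu `[a, x] phi)).
    by move=> x; rewrite inE /= in_itv /= => /hg ->.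
  exact: measurable_funM hv.1 mF.
set M := Rintegral mu `[a, b] (fun t => `|phi t|).
have M0 : 0 <= M by apply: Rintegral_ge0 => t _.
apply: (@le_integrable _ _ _ mu _ (measurable_itv _) _
  (fun y => (M `^ (q - 1))%:E * (`|v y| `^ q)%:E)%E).
- apply/measurable_EFinP; apply: measurable_funM; first exact: hv.1.
  by apply: measurableT_comp; [exact: spow_measurable|exact: mg].
- move=> x; rewrite /= in_itv /= => hx; rewrite lee_fin.
  rewrite [X in _ <= X]ger0_norm; last by apply: mulr_ge0; apply: powR_ge0.
  rewrite normrM (le_trans (ler_wpM2l (normr_ge0 _) (norm_spow _ _))) //.
  rewrite hg // normrM powRM ?normr_ge0 // mulrA mulr_powRB1 ?normr_ge0 //; last lra.
  rewrite mulrC ler_wpM2r ?powR_ge0 //.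
  apply: ge0_ler_powR; rewrite ?nnegrE ?normr_ge0 //; first lra.
  exact: Rint_norm_bound.
- by apply: integrableZl => //; exact: Lp_integrable.
Qed.

End Integ.



Section Fub.
Variable R : realType.
Local Notation mu := (@lebesgue_measure R).
Variables (a b : R) (phi psi : R -> R).
Hypothesis ab : a <= b.
Hypothesis iphi : mu.-integrable `[a, b] (EFin \o phi).
Hypothesis ipsi : mu.-integrable `[a, b] (EFin \o psi).

Let phr : R -> R := phi \_ `[a, b].
Let psr : R -> R := psi \_ `[a, b].
Let S : set (R * R) := [set z | z.1 <= z.2].

Let mS : measurable S.
Proof.
have h : measurable_fun setT (fun z : R * R => z.2 - z.1).
  by apply: measurable_funB; [exact: measurable_snd|exact: measurable_fst].
have -> : S = setT `&` ((fun z : R * R => z.2 - z.1) @^-1` `[0, +oo[).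
  apply/seteqP; split => z /=; rewrite in_itv /= andbT subr_ge0 //.
  by case.
exact: h measurableT _ (measurable_itv _).
Qed.

Let mphr : measurable_fun setT phr.
Proof.
apply: (measurable_restrictT phi (measurable_itv `[a, b])).1.
by have := measurable_int mu iphi; move/measurable_EFinP.
Qed.
Let mpsr : measurable_fun setT psr.
Proof.
apply: (measurable_restrictT psi (measurable_itv `[a, b])).1.
by have := measurable_int mu ipsi; move/measurable_EFinP.
Qed.

Let F (z : R * R) : R := phr z.1 * psr z.2 * \1_S z.

Let mF : measurable_fun setT F.
Proof.
apply: measurable_funM; last exact: measurable_indic.
apply: measurable_funM.
  by apply: measurableT_comp; [exact: mphr|exact: measurable_fst].
by apply: measurableT_comp; [exact: mpsr|exact: measurable_snd].
Qed.


Let intS (c d : R) : a <= c -> d <= b ->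
  mu.-integrable setT (EFin \o (psi \_ `[c, d])).
Proof.
move=> ac db; rewrite -restrict_EFin.
apply: (@integrable_mkcond _ _ _ mu `[c, d] (EFin \o psi) (measurable_itv _)).1.
apply: (@integrableS _ _ _ mu `[a, b]) => //.
by apply: subset_itv; rewrite bnd_simp.
Qed.

Let intP (c d : R) : a <= c -> d <= b ->
  mu.-integrable setT (EFin \o (phi \_ `[c, d])).
Proof.
move=> ac db; rewrite -restrict_EFin.
apply: (@integrable_mkcond _ _ _ mu `[c, d] (EFin \o phi) (measurable_itv _)).1.
apply: (@integrableS _ _ _ mu `[a, b]) => //.
by apply: subset_itv; rewrite bnd_simp.
Qed.

Let Rint_patch (f : R -> R) (c d : R) : mu.-integrable setT (EFin \o (f \_ `[c, d])) ->
  (\int[mu]_y ((f \_ `[c, d]) y)%:E)%E = (Rintegral mu `[c, d] f)%:E.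
Proof.
move=> h; rewrite Rintegral_mkcond fineK //.
exact: (integrable_fin_num (measurableT) h).
Qed.

Let innerY x : (\int[mu]_y (F (x, y))%:E)%E = (phr x * Rintegral mu `[x, b] psi)%:E.
Proof.
have [xab|xab] := boolP (x \in `[a, b]%classic); last first.
  have p0 : phr x = 0 by rewrite /phr patchE (negbTE xab).
  rewrite p0 mul0r; under eq_integral do rewrite /F /= p0 !mul0r.
  by rewrite integral0.
move: (xab); rewrite in_setE /= in_itv /= => /andP[ax xb].
transitivity (\int[mu]_y ((phr x)%:E * ((psi \_ `[x, b]) y)%:E))%E.
  apply: eq_integral => y _; rewrite /F /= -EFinM -mulrA; congr (_ * _)%:E.
  rewrite /psr !patchE indicE.
  have [yx|xy] := ltP y x.
    rewrite (memNset (A := S)) /=; last by rewrite /S /= => h; lra.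
    rewrite mulr0 memNset //= in_itv /= => /andP[h1 h2]; lra.
  rewrite (mem_set (A := S)) //= mulr1.
  have [yb|yb] := leP y b.
    by rewrite !mem_set //= in_itv /=; apply/andP; split => //; lra.
  by rewrite !memNset //= in_itv /= => /andP[h1 h2]; lra.
rewrite integralZl //; last exact: intS.
by rewrite Rint_patch ?EFinM //; exact: intS.
Qed.

Let innerX y : (\int[mu]_x (F (x, y))%:E)%E = (psr y * Rintegral mu `[a, y] phi)%:E.
Proof.
have [yab|yab] := boolP (y \in `[a, b]%classic); last first.
  have p0 : psr y = 0 by rewrite /psr patchE (negbTE yab).
  rewrite p0 mul0r; under eq_integral do rewrite /F /= p0 mulr0 mul0r.
  by rewrite integral0.
move: (yab); rewrite in_setE /= in_itv /= => /andP[ay yb].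
transitivity (\int[mu]_x ((psr y)%:E * ((phi \_ `[a, y]) x)%:E))%E.
  apply: eq_integral => x _; rewrite /F /= -EFinM mulrAC [in RHS]mulrC; congr (_ * _)%:E.
  rewrite /phr !patchE indicE.
  have [yx|xy] := ltP y x.
    rewrite (memNset (A := S)) /=; last by rewrite /S /= => h; lra.
    rewrite mulr0 memNset //= in_itv /= => /andP[h1 h2]; lra.
  rewrite (mem_set (A := S)) //= mulr1.
  have [ax|ax] := leP a x.
    by rewrite !mem_set //= in_itv /=; apply/andP; split => //; lra.
  by rewrite !memNset //= in_itv /= => /andP[h1 h2]; lra.
rewrite integralZl //; last exact: intP.
by rewrite Rint_patch ?EFinM //; exact: intP.
Qed.

Let absfin (f : R -> R) : mu.-integrable setT (EFin \o f) ->
  (\int[mu]_y (`|f y|)%:E)%E = (Rintegral mu setT (fun y => `|f y|))%:E.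
Proof.
move=> h; rewrite fineK //.
have := integrable_fin_num measurableT (integrable_abse h).
by [].
Qed.

Let iF : (mu \x mu)%E.-integrable setT (EFin \o F).
Proof.
have mEF : measurable_fun setT (EFin \o F) by apply/measurable_EFinP.
apply: (integrable12ltyP mu mu mEF).2.
have ipsr : mu.-integrable setT (EFin \o psr) by exact: intS.
have iphr : mu.-integrable setT (EFin \o phr) by exact: intP.
set cy := Rintegral mu setT (fun y => `|psr y|).
set cx := Rintegral mu setT (fun y => `|phr y|).
apply: (@le_lt_trans _ _ (\int[mu]_x ((`|phr x| * cy)%:E))%E).
  apply: ge0_le_integral => //.
  - by move=> x _; apply: integral_ge0.
  - have m1 : measurable_fun setT (fun z => `|(F z)%:E|)%E.
      exact: measurableT_comp.
    exact: (@measurable_fun_fubini_tonelli_F _ _ _ _ _ mu (fun z => `|(F z)%:E|)%E m1 (fun z => abse_ge0 _)).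
  - apply/measurable_EFinP; apply: measurable_funM => //.
    exact: (measurableT_comp (@normr_measurable R setT) mphr).
  - move=> x _.
    have mFx : measurable_fun setT (fun y => F (x, y)).
      exact: (measurableT_comp mF (pair1_measurable x)).
    have mpsa : measurable_fun setT (fun y => `|psr y|).
      exact: (measurableT_comp (@normr_measurable R setT) mpsr).
    apply: (@le_trans _ _ (\int[mu]_y ((`|phr x|)%:E * (`|psr y|)%:E))%E).
      apply: ge0_le_integral => //.
      + by apply: measurableT_comp => //; apply/measurable_EFinP.
      + by rewrite -/(EFin \o _); apply/measurable_EFinP; apply: measurable_funM.
      + move=> y _; rewrite /F /= -EFinM lee_fin !normrM -[X in _ <= X]mulr1.
        by apply: ler_wpM2l; rewrite ?mulr_ge0 // indicE; case: (_ \in _); rewrite ?normr1 ?normr0.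
    rewrite ge0_integralZl_EFin //; last by apply/measurable_EFinP.
    by rewrite absfin // EFinM.
rewrite (_ : (fun x => _) = (fun x => (`|phr x|)%:E * cy%:E)%E); last first.
  by apply/funext => x; rewrite EFinM.
rewrite ge0_integralZr //; last 2 first.
  by apply: measurableT_comp => //; exact: measurableT_comp.
  by rewrite lee_fin Rintegral_ge0.
by rewrite absfin // -EFinM ltry.
Qed.

Lemma fubini_swap :
  Rintegral mu `[a, b] (fun x => phi x * Rintegral mu `[x, b] psi) =
  Rintegral mu `[a, b] (fun y => psi y * Rintegral mu `[a, y] phi).
Proof.
have := Fubini iF; rewrite /comp.
under eq_integral do rewrite innerY.
under [X in _ = X -> _]eq_integral do rewrite innerX.
have e1 : (\int[mu]_x ((phr x * Rintegral mu `[x, b] psi)%:E))%E =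
    (\int[mu]_(x in `[a, b]) ((phi x * Rintegral mu `[x, b] psi)%:E))%E.
  rewrite [RHS]integral_mkcond; apply: eq_integral => x _; rewrite /phr !patchE.
  by case: ifPn => //; rewrite mul0r.
have e2 : (\int[mu]_x ((psr x * Rintegral mu `[a, x] phi)%:E))%E =
    (\int[mu]_(x in `[a, b]) ((psi x * Rintegral mu `[a, x] phi)%:E))%E.
  rewrite [RHS]integral_mkcond; apply: eq_integral => x _; rewrite /psr !patchE.
  by case: ifPn => //; rewrite mul0r.
rewrite e1 e2 => h.
by rewrite /Rintegral h.
Qed.

End Fub.



Section Lam.
Variable R : realType.
Local Notation mu := (@lebesgue_measure R).

Lemma lam_pos (a b p q : R) (u v g f : R -> R) (lam : R) :
  a < b -> 1 < p -> 1 < q ->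
  in_Lp a b ((1 - p^-1)^-1) u -> in_Lp a b q v ->
  spectral_triple a b p q u v g f lam -> 0 < lam.
Proof.
move=> ab p1 q1 hu hv [fLp pn hg hf].
set phi := fun t => f t * u t.
have iphi : mu.-integrable `[a, b] (EFin \o phi) by exact: (@prod_integrable R a b p f u p1 fLp hu).
set psi := fun y => v y * spow q (g y).
have ipsi : mu.-integrable `[a, b] (EFin \o psi).
  by apply: (@psi_integrable R a b q v g phi ab q1 hv iphi) => x hx; rewrite hg.
set I := Rintegral mu `[a, b] (fun x => `|f x| `^ p).
have I0 : I != 0.
  apply/eqP => I0; move: pn; rewrite /pnorm -/I I0 powR0 //.
    by move=> /eqP; rewrite eq_sym oner_eq0.
  by rewrite invr_eq0; apply/eqP => h; lra.
have ptw : forall x, a <= x <= b ->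
    `|f x| `^ p = lam * (phi x * Rintegral mu `[x, b] psi).
  move=> x hx; rewrite -spow_mul_self; last lra.
  by rewrite hf // /Tstar /phi; ring.
have lam0 : lam != 0.
  apply/eqP => l0; move/eqP: I0; apply.
  rewrite /I (@eq_Rintegral _ _ _ mu _ (fun=> 0)); last first.
    by move=> x; rewrite inE /= in_itv /= => hx; rewrite ptw // l0 mul0r.
  by rewrite Rintegral_cst // mul0r.
have eJ : Rintegral mu `[a, b] (fun x => phi x * Rintegral mu `[x, b] psi) = lam^-1 * I.
  rewrite /I -RintegralZl //; last exact: Lp_integrable.
  apply: eq_Rintegral => x; rewrite inE /= in_itv /= => hx.
  by rewrite ptw // mulrA mulVf // mul1r.
have J0 : 0 <= Rintegral mu `[a, b] (fun x => phi x * Rintegral mu `[x, b] psi).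
  rewrite (@fubini_swap R a b phi psi iphi ipsi).
  apply: Rintegral_ge0 => y; rewrite /= in_itv /= => hy.
  rewrite /psi -mulrA mulrC -mulrA.
  have -> : Rintegral mu `[a, y] phi * v y = g y by rewrite hg // /Top mulrC.
  by rewrite mulrC spow_mul_self ?powR_ge0 //; lra.
have Ipos : 0 < I.
  by rewrite lt_neqAle eq_sym I0 /=; apply: Rintegral_ge0 => x _; exact: powR_ge0.
move: J0; rewrite eJ pmulr_lge0 // invr_ge0 le_eqVlt => /predU1P[h|//].
by move: lam0; rewrite h eqxx.
Qed.

End Lam.



Section Main.
Variable R : realType.
Local Notation mu := (@lebesgue_measure R).

Lemma sc_eq (a b : R) (h1 h2 : R -> R) n :
  (forall x, a < x < b -> h1 x = h2 x) ->
  has_sign_changes a b h1 n -> has_sign_changes a b h2 n.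
Proof. by move=> H; apply: sc_sg => x hx; rewrite H. Qed.

Lemma sc_pos (a b : R) (k h1 h2 : R -> R) n :
  (forall x, a < x < b -> 0 < k x) ->
  (forall x, a < x < b -> h1 x = k x * h2 x) ->
  has_sign_changes a b h1 n -> has_sign_changes a b h2 n.
Proof.
move=> Hk H; apply: sc_sg => x hx; rewrite H // sgrM gtr0_sg ?mul1r //; exact: Hk.
Qed.

Lemma comb_int (i : interval R) (f1 f2 : R -> R) (c : R) :
  mu.-integrable [set` i] (EFin \o f1) -> mu.-integrable [set` i] (EFin \o f2) ->
  mu.-integrable [set` i] (EFin \o (fun x => f1 x - c * f2 x)).
Proof.
move=> i1 i2.
apply: (@eq_integrable _ _ _ mu _ _ (fun x => (f1 x)%:E - (c%:E * (f2 x)%:E))%E) => //.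
apply: (@integrableB _ _ _ mu) => //.
exact: (@integrableZl _ _ _ mu).
Qed.

Lemma comb_Rint (i : interval R) (f1 f2 : R -> R) (c : R) :
  mu.-integrable [set` i] (EFin \o f1) -> mu.-integrable [set` i] (EFin \o f2) ->
  Rintegral mu [set` i] (fun x => f1 x - c * f2 x) =
  Rintegral mu [set` i] f1 - c * Rintegral mu [set` i] f2.
Proof.
move=> i1 i2; rewrite RintegralB //; first by rewrite RintegralZl.
apply: (@eq_integrable _ _ _ mu _ _ (fun x => (c%:E * (f2 x)%:E))%E) => //.
exact: (@integrableZl _ _ _ mu).
Qed.

End Main.

Theorem mainTheorem2 (R : realType) (a b p q : R) (u v : R -> R)
  (g1 f1 g2 f2 : R -> R) (lam1 lam2 : R) :
  a < b -> 1 < p -> 1 < q ->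
  (forall x, a <= x <= b -> 0 < u x) ->
  (forall x, a <= x <= b -> 0 < v x) ->
  in_Lp a b ((1 - p^-1)^-1) u ->
  in_Lp a b q v ->
  spectral_triple a b p q u v g1 f1 lam1 ->
  spectral_triple a b p q u v g2 f2 lam2 ->
  forall eps : R, 0 < eps ->
    (P a b (fun x => (Top a u v f1 x - eps * Top a u v f2 x)%R)
     <= P a b (fun x => (Top a u v f1 x
                 - (eps `^ ((p - 1) / (q - 1)) * (lam2 / lam1) `^ ((q - 1)^-1))
                   * Top a u v f2 x)%R))%E.
Proof.
move=> ab p1 q1 upos vpos hu hv st1 st2 eps eps0.
have l1 := @lam_pos R a b p q u v g1 f1 lam1 ab p1 q1 hu hv st1.
have l2 := @lam_pos R a b p q u v g2 f2 lam2 ab p1 q1 hu hv st2.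
case: st1 => fLp1 _ hg1 hf1; case: st2 => fLp2 _ hg2 hf2.
pose phi1 := fun t => f1 t * u t.
pose phi2 := fun t => f2 t * u t.
have iphi1 : (@lebesgue_measure R).-integrable `[a, b] (EFin \o phi1).
  exact: (@prod_integrable R a b p f1 u p1 fLp1 hu).
have iphi2 : (@lebesgue_measure R).-integrable `[a, b] (EFin \o phi2).
  exact: (@prod_integrable R a b p f2 u p1 fLp2 hu).
pose psi1 := fun y => v y * spow q (g1 y).
pose psi2 := fun y => v y * spow q (g2 y).
have ipsi1 : (@lebesgue_measure R).-integrable `[a, b] (EFin \o psi1).
  by apply: (@psi_integrable R a b q v g1 phi1 ab q1 hv iphi1) => x hx; rewrite hg1.
have ipsi2 : (@lebesgue_measure R).-integrable `[a, b] (EFin \o psi2).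
  by apply: (@psi_integrable R a b q v g2 phi2 ab q1 hv iphi2) => x hx; rewrite hg2.
pose del := eps `^ (p - 1) * (lam2 / lam1).
pose c := eps `^ ((p - 1) / (q - 1)) * (lam2 / lam1) `^ ((q - 1)^-1).
have c0 : 0 < c by rewrite /c mulr_gt0 // powR_gt0 // divr_gt0.
have cq : c `^ (q - 1) = del.
  rewrite /c /del powRM ?powR_ge0 // -!powRrM divfK; last by rewrite subr_eq0 gt_eqF.
  by rewrite mulVf ?subr_eq0 ?gt_eqF // powRr1 // ltW // divr_gt0.
have inab : forall x, a < x < b -> a <= x <= b.
  by move=> x /andP[h1 h2]; apply/andP; split; lra.
apply: P_mono => n H.
have H1 : has_sign_changes a b (fun x => Rintegral (@lebesgue_measure R) `[a, x] phi1
     - eps * Rintegral (@lebesgue_measure R) `[a, x] phi2) n.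
  apply: (@sc_pos R a b v _ _ n _ _ H) => x hx; first by apply: vpos; exact: inab.
  by rewrite /Top /phi1 /phi2; ring.
have H2 : has_sign_changes a b (fun x => Rintegral (@lebesgue_measure R) `[a, x]
     (fun t => phi1 t - eps * phi2 t)) n.
  apply: (@sc_eq R a b _ _ n _ H1) => x hx; rewrite comb_Rint //.
    apply: (@integrableS _ _ _ (@lebesgue_measure R) `[a, b]) => //; apply: subset_itv; rewrite bnd_simp; lra.
  apply: (@integrableS _ _ _ (@lebesgue_measure R) `[a, b]) => //; apply: subset_itv; rewrite bnd_simp; lra.
have H3 := @vd_fwd R a b _ n ab (@comb_int R _ _ _ eps iphi1 iphi2) H2.
have H4 : has_sign_changes a b (fun t => f1 t - eps * f2 t) n.
  apply: (@sc_pos R a b u _ _ n _ _ H3) => x hx; first by apply: upos; exact: inab.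
  by rewrite /phi1 /phi2; ring.
have H5 : has_sign_changes a b
    (fun t => spow p (f1 t) - eps `^ (p - 1) * spow p (f2 t)) n.
  by apply: (@sc_sg R a b _ _ n _ H4) => x _; apply: sg_spow_subeps.
have H6 : has_sign_changes a b (fun x => Rintegral (@lebesgue_measure R) `[x, b] psi1
     - del * Rintegral (@lebesgue_measure R) `[x, b] psi2) n.
  apply: (@sc_pos R a b (fun x => lam1 * u x) _ _ n _ _ H5) => x hx.
    by apply: mulr_gt0 => //; apply: upos; exact: inab.
  rewrite hf1 ?hf2; try exact: inab.
  rewrite /Tstar /del /psi1 /psi2; field.
  by rewrite gt_eqF.
have H7 : has_sign_changes a b (fun x => Rintegral (@lebesgue_measure R) `[x, b]
     (fun t => psi1 t - del * psi2 t)) n.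
  apply: (@sc_eq R a b _ _ n _ H6) => x hx; rewrite comb_Rint //.
    apply: (@integrableS _ _ _ (@lebesgue_measure R) `[a, b]) => //; apply: subset_itv; rewrite bnd_simp; lra.
  apply: (@integrableS _ _ _ (@lebesgue_measure R) `[a, b]) => //; apply: subset_itv; rewrite bnd_simp; lra.
have H8 := @vd_bwd R a b _ n ab (@comb_int R _ _ _ del ipsi1 ipsi2) H7.
have H9 : has_sign_changes a b
    (fun t => spow q (g1 t) - del * spow q (g2 t)) n.
  apply: (@sc_pos R a b v _ _ n _ _ H8) => x hx; first by apply: vpos; exact: inab.
  by rewrite /psi1 /psi2; ring.
have H10 : has_sign_changes a b (fun t => g1 t - c * g2 t) n.
  by apply: (@sc_sg R a b _ _ n _ H9) => x _; rewrite -cq -sg_spow_subeps.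
apply: (@sc_eq R a b _ _ n _ H10) => x hx; rewrite hg1 ?hg2 //; exact: inab.
Qed.
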